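(* Let $1\le N_a<N_b$, $\mathcal N=N_a+N_b$, real $\kappa_1<\dots<\kappa_{\mathcal N}$ with indices taken modulo $\mathcal N$. For $q=(q_1,q_2)\in\mathbb R^2$ define $q_{mn}=q_2-(\kappa_m+\kappa_n)q_1+\kappa_m\kappa_n$, $\widetilde q_{mn}=(\kappa_m-\kappa_n)q_{mn}$, $\rho_k(q)=\theta(\widetilde q_{k,k-N_a})\theta(\widetilde q_{k+N_a,k})$ ($\theta$ the Heaviside step function) and $P_m(q)=\prod_{k=m+N_a}^{m+N_b}\rho_k(q)$. Let $$\epsilon_m(q)=\prod_{k=m}^{m+N_b}\theta(\widetilde q_{k+N_a,k}).$$ Then $$\epsilon_m(q)=P_m(q)\quad\text{if } N_b\ge 2N_a-1,\qquad \epsilon_m(q)=P_m(q)\prod_{k=m+N_b-N_a+1}^{m+N_a-1}\theta(\widetilde q_{k+N_a,k})\quad\text{if } N_b<2N_a-1 .$$ Consequently the polygon with characteristic function $\epsilon_m$ is contained in the polygon with characteristic function $P_m$ and in the parabolic region $q_2\ge q_1^2$. Moreover, the polygon defined by $\epsilon_m$ is not void.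
   Context: Indices of $\kappa$ are read modulo $\mathcal N$, i.e. $\kappa_{l+\mathcal N}=\kappa_l$. The region defined by $P_m$ is a polygon inside the parabolic region $q_2\ge q_1^2$ with a vertex at $(\kappa_m,\kappa_m^2)$. *)

(* Defs.v *)
From mathcomp Require Import all_boot all_order all_algebra.
From mathcomp Require Import reals.
Set Implicit Arguments. Unset Strict Implicit. Unset Printing Implicit Defensive.
Import Order.TTheory GRing.Theory Num.Theory.
Local Open Scope ring_scope.

Section Defs.
Variable R : realType.

Definition theta (x : R) : R := if 0 < x then 1 else 0.

(* kappa is given on indices 1..N; indices are read modulo N:
   kap N kappa k = kappa_l with l in 1..N, l = k mod N. *)
Definition kap (N : nat) (kappa : nat -> R) (k : nat) : R :=
  kappa (((k + N.-1) %% N).+1)%N.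

Definition qmn N kappa (m n : nat) (q : R * R) : R :=
  q.2 - (kap N kappa m + kap N kappa n) * q.1 + kap N kappa m * kap N kappa n.

Definition qt N kappa (m n : nat) (q : R * R) : R :=
  (kap N kappa m - kap N kappa n) * qmn N kappa m n q.

Definition rho (Na Nb : nat) kappa (k : nat) (q : R * R) : R :=
  theta (qt (Na + Nb) kappa k (k - Na)%N q) *
  theta (qt (Na + Nb) kappa (k + Na)%N k q).

Definition Pm (Na Nb : nat) kappa (m : nat) (q : R * R) : R :=
  \prod_(m + Na <= k < (m + Nb).+1) rho Na Nb kappa k q.

Definition epsm (Na Nb : nat) kappa (m : nat) (q : R * R) : R :=
  \prod_(m <= k < (m + Nb).+1) theta (qt (Na + Nb) kappa (k + Na)%N k q).

End Defs.

(* Main.v *)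
Require Import Defs.
From mathcomp Require Import all_boot all_order all_algebra.
From mathcomp Require Import reals.
From mathcomp Require Import ring lra zify.
Set Implicit Arguments. Unset Strict Implicit.
Import Order.TTheory GRing.Theory Num.Theory.
Local Open Scope ring_scope.

Lemma prod_theta_1 (R : realType) (F : nat -> R) a b :
  (forall k, (a <= k < b)%N -> 0 < F k) -> \prod_(a <= k < b) theta (F k) = 1.
Proof.
move=> H; rewrite big_nat_cond; apply: big1 => k /andP[Hk _].
by rewrite /theta (H k Hk).
Qed.

Lemma prod_theta_0 (R : realType) (F : nat -> R) a b k :
  (a <= k < b)%N -> ~ (0 < F k) -> \prod_(a <= k < b) theta (F k) = 0.
Proof.
move=> Hk H; apply/eqP; rewrite prodf_seq_eq0; apply/hasP; exists k.
  by rewrite mem_index_iota.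
rewrite /=; apply/eqP; rewrite /theta; case: ifP => // Hp; exfalso; exact: H.
Qed.

Lemma prod_theta_inv (R : realType) (F : nat -> R) a b :
  \prod_(a <= k < b) theta (F k) = 1 -> forall k, (a <= k < b)%N -> 0 < F k.
Proof.
move=> H k Hk; case: (boolP (0 < F k)) => // /negP Hn.
by move: H; rewrite (prod_theta_0 Hk Hn) => /eqP; rewrite eq_sym oner_eq0.
Qed.

Lemma kap_mod (R : realType) N (kappa : nat -> R) a b :
  a = b %[mod N] -> kap N kappa a = kap N kappa b.
Proof.
move=> H; rewrite /kap; congr (kappa _.+1).
by rewrite -modnDml H modnDml.
Qed.

Lemma kap_small (R : realType) N (kappa : nat -> R) k :
  (1 <= k <= N)%N -> kap N kappa k = kappa k.
Proof.
move=> /andP[h1 h2]; rewrite /kap.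
have -> : (k + N.-1 = (k.-1) + N)%N by lia.
rewrite modnDr modn_small; last lia.
by congr kappa; lia.
Qed.

Lemma kap_big (R : realType) N (kappa : nat -> R) k :
  (N < k <= N + N)%N -> kap N kappa k = kappa (k - N)%N.
Proof.
move=> /andP[h1 h2]; rewrite -(@kap_small _ N kappa (k - N)%N); last lia.
apply: kap_mod.
have -> : k = ((k - N) + N)%N by lia.
by rewrite modnDr addnK.
Qed.

Lemma Pm_split (R : realType) Na Nb (kappa : nat -> R) m q :
  Pm Na Nb kappa m q =
  (\prod_(m + Na <= k < (m + Nb).+1) theta (qt (Na + Nb) kappa k (k - Na) q)) *
  (\prod_(m + Na <= k < (m + Nb).+1) theta (qt (Na + Nb) kappa (k + Na) k q)).
Proof. by rewrite /Pm /rho big_split. Qed.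

Lemma part12 (R : realType) (Na Nb : nat) (kappa : nat -> R) m q
  (hNa : (1 <= Na)%N) (hNab : (Na < Nb)%N) :
  let g := fun k => qt (Na + Nb) kappa (k + Na) k q in
  ((2 * Na - 1 <= Nb)%N -> epsm Na Nb kappa m q = Pm Na Nb kappa m q)
  /\ ((Nb < 2 * Na - 1)%N ->
        epsm Na Nb kappa m q =
        Pm Na Nb kappa m q *
        \prod_(m + Nb - Na + 1 <= k < m + Na) theta (g k)).
Proof.
move=> g.
have sh : forall k, (Na <= k)%N ->
   qt (Na + Nb) kappa k (k - Na) q = g (k - Na)%N.
  by move=> k hk; rewrite /g subnK.
case: (boolP (all (fun k => 0 < g k) (index_iota m (m + Nb).+1))) => [/allP Hall | /allPn [k0 Hk0 Hn]].
  have H : forall k, (m <= k < (m + Nb).+1)%N -> 0 < g k.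
    by move=> k hk; apply: Hall; rewrite mem_index_iota.
  have E1 : epsm Na Nb kappa m q = 1 by apply: prod_theta_1.
  have E2 : Pm Na Nb kappa m q = 1.
    rewrite Pm_split !prod_theta_1 ?mulr1 // => k hk.
      apply: H; lia.
    rewrite sh; last lia. apply: H; lia.
  split=> _; rewrite E1 E2 // mul1r prod_theta_1 // => k hk; apply: H; lia.
rewrite mem_index_iota in Hk0. move/negP: Hn => Hn.
have E1 : epsm Na Nb kappa m q = 0 by apply: (prod_theta_0 Hk0).
have P0 : (k0 <= m + Nb - Na)%N \/ (m + Na <= k0)%N -> Pm Na Nb kappa m q = 0.
  case=> hk; rewrite Pm_split.
    rewrite (@prod_theta_0 _ _ _ _ (k0 + Na)) ?mul0r //; first lia.
    by rewrite addnK.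
  by rewrite [X in _ * X](prod_theta_0 (k := k0)) ?mulr0 //; lia.
split=> h.
  by rewrite E1 P0 //; lia.
rewrite E1.
have [hk|hk] : ((k0 <= m + Nb - Na)%N \/ (m + Na <= k0)%N) \/
    (m + Nb - Na + 1 <= k0 < m + Na)%N by lia.
  by rewrite P0 ?mul0r.
by rewrite (prod_theta_0 hk Hn) mulr0.
Qed.

Definition Qr (R : realType) (q : R * R) (a b : R) := q.2 - (a + b) * q.1 + a * b.

Lemma kle (R : realType) (N : nat) (kappa : nat -> R)
  (hinc : forall i j : nat, (1 <= i)%N -> (i < j)%N -> (j <= N)%N -> kappa i < kappa j)
  i j : (1 <= i)%N -> (i <= j)%N -> (j <= N)%N -> kappa i <= kappa j.
Proof.
move=> h1 h2 h3; case: (ltngtP i j) => h; first by apply/ltW/hinc.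
  lia.
by rewrite h.
Qed.

Lemma one_contra (R : realType) (q : R * R) a b :
  a <= q.1 -> q.1 <= b -> 0 < Qr q a b -> q.2 < q.1 ^+ 2 -> False.
Proof. rewrite /Qr => h1 h2 h3 h4. nra. Qed.

Lemma one_contra' (R : realType) (q : R * R) a b :
  a <= q.1 -> q.1 <= b -> 0 < Qr q b a -> q.2 < q.1 ^+ 2 -> False.
Proof. rewrite /Qr => h1 h2 h3 h4. nra. Qed.

Lemma cover (R : realType) (N Na : nat) (kappa : nat -> R)
  (hinc : forall i j : nat, (1 <= i)%N -> (i < j)%N -> (j <= N)%N -> kappa i < kappa j)
  (hNa : (1 <= Na)%N) (q : R * R) lo d :
  (1 <= lo)%N -> (lo + d + Na <= N)%N ->
  (forall j, (lo <= j <= lo + d)%N -> 0 < Qr q (kappa (j + Na)%N) (kappa j)) ->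
  q.2 < q.1 ^+ 2 -> q.1 < kappa lo \/ kappa (lo + d + Na)%N < q.1.
Proof.
move=> hlo; elim: d => [|d IH] hN H hq.
  case: (ltrP q.1 (kappa lo)) => h1; first by left.
  case: (ltrP (kappa (lo + 0 + Na)%N) q.1) => h2; first by right.
  exfalso; apply: (one_contra' h1 _ (H lo _) hq); last lia.
  by rewrite addn0 in h2.
case: (ltrP (kappa (lo + d + Na)%N) q.1) => h.
  case: (ltrP (kappa (lo + d.+1 + Na)%N) q.1) => h2; first by right.
  exfalso.
  have h3 : kappa (lo + d.+1)%N <= q.1.
    apply: le_trans (ltW h); apply: (kle hinc); lia.
  apply: (one_contra' h3 _ (H (lo + d.+1)%N _) hq); last lia.
  by [].
have H' : forall j, (lo <= j <= lo + d)%N -> 0 < Qr q (kappa (j + Na)%N) (kappa j).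
  move=> j hj; apply: H; lia.
have hN' : (lo + d + Na <= N)%N by lia.
have [h1|h1] := IH hN' H' hq; first by left.
by exfalso; move: h; rewrite leNgt h1.
Qed.

Lemma sideL (R : realType) (q : R * R) a b c :
  q.1 < a -> c < b -> 0 < Qr q c a -> Qr q a b < 0 -> False.
Proof. rewrite /Qr => h1 h2 h3 h4. nra. Qed.

Lemma sideR (R : realType) (q : R * R) a b c :
  b < q.1 -> a < c -> 0 < Qr q b c -> Qr q a b < 0 -> False.
Proof. rewrite /Qr => h1 h2 h3 h4. nra. Qed.

Lemma caseAC (R : realType) (Na Nb : nat) (kappa : nat -> R)
  (hinc : forall i j : nat, (1 <= i)%N -> (i < j)%N -> (j <= Na + Nb)%N -> kappa i < kappa j)
  (hNa : (1 <= Na)%N) (hNab : (Na < Nb)%N) (q : R * R) a :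
  (1 <= a <= Na)%N ->
  (forall j, (a <= j <= a + (Nb - Na))%N -> 0 < Qr q (kappa (j + Na)%N) (kappa j)) ->
  Qr q (kappa a) (kappa (a + Nb)%N) < 0 -> q.1 ^+ 2 <= q.2.
Proof.
move=> ha Hs Hl; rewrite leNgt; apply/negP => hq.
have [h|h] := cover hinc hNa (lo := a) (d := (Nb - Na)%N) ltac:(lia) ltac:(lia) Hs hq.
  apply: (sideL (c := kappa (a + Na)%N) h _ _ Hl); first by apply: hinc; lia.
  by apply: Hs; lia.
have e : (a + (Nb - Na) + Na = a + Nb)%N by lia.
rewrite e in h.
apply: (sideR (c := kappa (a + (Nb - Na))%N) h _ _ Hl); first by apply: hinc; lia.
by have := Hs (a + (Nb - Na))%N ltac:(lia); rewrite e.
Qed.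

Lemma caseB (R : realType) (Na Nb : nat) (kappa : nat -> R)
  (hinc : forall i j : nat, (1 <= i)%N -> (i < j)%N -> (j <= Na + Nb)%N -> kappa i < kappa j)
  (hNa : (1 <= Na)%N) (hNab : (Na < Nb)%N) (q : R * R) m :
  (Na < m <= Nb)%N ->
  (forall j, ((1 <= j <= m - Na) || (m <= j <= Nb))%N ->
     0 < Qr q (kappa (j + Na)%N) (kappa j)) ->
  Qr q (kappa 1%N) (kappa (Nb + 1)%N) < 0 ->
  Qr q (kappa Na) (kappa (Na + Nb)%N) < 0 ->
  q.1 ^+ 2 <= q.2.
Proof.
move=> hm Hs Hl1 Hl2; rewrite leNgt; apply/negP => hq.
have [h|h] := cover hinc hNa (lo := 1%N) (d := (m - Na - 1)%N) ltac:(lia) ltac:(lia)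
   ltac:(move=> j hj; apply: Hs; lia) hq.
  apply: (sideL (c := kappa (1 + Na)%N) h _ _ Hl1); first by apply: hinc; lia.
  by apply: Hs; lia.
have e : (1 + (m - Na - 1) + Na = m)%N by lia.
rewrite e in h.
have [h2|h2] := cover hinc hNa (lo := m) (d := (Nb - m)%N) ltac:(lia) ltac:(lia)
   ltac:(move=> j hj; apply: Hs; lia) hq.
  by move: h; rewrite ltNge (ltW h2).
have e2 : (m + (Nb - m) + Na = Na + Nb)%N by lia.
rewrite e2 in h2.
apply: (sideR (c := kappa Nb) h2 _ _ Hl2); first by apply: hinc; lia.
by have := Hs Nb ltac:(lia); rewrite addnC.
Qed.

Lemma kapS (R : realType) N (kappa : nat -> R) k j :
  (1 <= k <= N)%N -> k = j -> kap N kappa k = kappa j.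
Proof. by move=> h <-; apply: kap_small. Qed.

Lemma kapB (R : realType) N (kappa : nat -> R) k j :
  (N < k <= N + N)%N -> (k - N)%N = j -> kap N kappa k = kappa j.
Proof. by move=> h <-; apply: kap_big. Qed.

Lemma shortf (R : realType) N (kappa : nat -> R) q u v i j :
  kap N kappa u = kappa i -> kap N kappa v = kappa j -> kappa j < kappa i ->
  0 < qt N kappa u v q -> 0 < Qr q (kappa i) (kappa j).
Proof.
move=> hu hv hlt; rewrite /qt /qmn hu hv pmulr_rgt0 //; by rewrite subr_gt0.
Qed.

Lemma longf (R : realType) N (kappa : nat -> R) q u v i j :
  kap N kappa u = kappa i -> kap N kappa v = kappa j -> kappa i < kappa j ->
  0 < qt N kappa u v q -> Qr q (kappa i) (kappa j) < 0.
Proof.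
move=> hu hv hlt; rewrite /qt /qmn hu hv nmulr_rgt0 //; by rewrite subr_lt0.
Qed.

Lemma part4 (R : realType) (Na Nb : nat) (kappa : nat -> R)
  (hNa : (1 <= Na)%N) (hNab : (Na < Nb)%N)
  (hinc : forall i j : nat, (1 <= i)%N -> (i < j)%N -> (j <= Na + Nb)%N ->
          kappa i < kappa j)
  (m : nat) (hm1 : (1 <= m)%N) (hm2 : (m <= Na + Nb)%N) (q : R * R) :
  epsm Na Nb kappa m q = 1 -> q.1 ^+ 2 <= q.2.
Proof.
move=> /prod_theta_inv H.
have [hA|[hB|hC]] : (m <= Na)%N \/ (Na < m <= Nb)%N \/ (Nb < m)%N by lia.
- apply: (@caseAC _ Na Nb kappa hinc hNa hNab q m); first lia.
    move=> j hj; apply: (@shortf _ (Na + Nb) _ _ (j + Na)%N j).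
    + by apply: kapS; lia.
    + by apply: kapS; lia.
    + by apply: hinc; lia.
    + by apply: H; lia.
  apply: (@longf _ (Na + Nb) _ _ (m + Nb + Na)%N (m + Nb)%N).
  + by apply: kapB; lia.
  + by apply: kapS; lia.
  + by apply: hinc; lia.
  + by apply: H; lia.
- apply: (@caseB _ Na Nb kappa hinc hNa hNab q m); first lia.
  + move=> j /orP[hj|hj].
      apply: (@shortf _ (Na + Nb) _ _ (j + Na + Nb + Na)%N (j + Na + Nb)%N).
      * by apply: kapB; lia.
      * by apply: kapB; lia.
      * by apply: hinc; lia.
      * by apply: H; lia.
    apply: (@shortf _ (Na + Nb) _ _ (j + Na)%N j).
    * by apply: kapS; lia.
    * by apply: kapS; lia.
    * by apply: hinc; lia.
    * by apply: H; lia.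
  + apply: (@longf _ (Na + Nb) _ _ (Nb + 1 + Na)%N (Nb + 1)%N).
    * by apply: kapB; lia.
    * by apply: kapS; lia.
    * by apply: hinc; lia.
    * by apply: H; lia.
  + apply: (@longf _ (Na + Nb) _ _ (Na + Nb + Na)%N (Na + Nb)%N).
    * by apply: kapB; lia.
    * by apply: kapS; lia.
    * by apply: hinc; lia.
    * by apply: H; lia.
- apply: (@caseAC _ Na Nb kappa hinc hNa hNab q (m - Nb)%N); first lia.
    move=> j hj; apply: (@shortf _ (Na + Nb) _ _ (j + Na + Nb + Na)%N (j + Na + Nb)%N).
    + by apply: kapB; lia.
    + by apply: kapB; lia.
    + by apply: hinc; lia.
    + by apply: H; lia.
  apply: (@longf _ (Na + Nb) _ _ (m + Na)%N m).
  + by apply: kapB; lia.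
  + by apply: kapS; lia.
  + by apply: hinc; lia.
  + by apply: H; lia.
Qed.

Lemma tail_ok (R : realType) (t0 c a b : R) :
  0 < c -> c <= 1 -> 0 <= a -> 0 < (1 - t0) * a + t0 * b ->
  0 < (1 - t0 * c) * a + t0 * c * b.
Proof.
move=> hc hc1 ha h.
have -> : (1 - t0 * c) * a + t0 * c * b = (1 - c) * a + c * ((1 - t0) * a + t0 * b) by ring.
have : 0 <= (1 - c) * a by apply: mulr_ge0 => //; lra.
have : 0 < c * ((1 - t0) * a + t0 * b) by apply: mulr_gt0.
lra.
Qed.

Lemma find_t (R : realType) (s : seq nat) (a b : nat -> R) :
  (forall k, k \in s -> 0 < a k \/ (a k = 0 /\ 0 < b k)) ->
  exists t : R, 0 < t /\ t < 1 /\ forall k, k \in s -> 0 < (1 - t) * a k + t * b k.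
Proof.
elim: s => [|k s IH] H.
  by exists (1/2); split; [lra|split; [lra|]].
have [t0 [ht0 [ht1 Ht]]] : exists t : R, 0 < t /\ t < 1 /\
   forall k, k \in s -> 0 < (1 - t) * a k + t * b k.
  by apply: IH => j hj; apply: H; rewrite inE hj orbT.
have Hk := H k (mem_head _ _).
have [c [hc [hc1 Hc]]] : exists c : R, 0 < c /\ c <= 1 /\
    0 < (1 - t0 * c) * a k + t0 * c * b k.
  case: Hk => [ha|[ha hb]].
    case: (lerP 0 (b k)) => hb.
      exists 1; split; first lra; split; first lra.
      rewrite mulr1.
      have : 0 < (1 - t0) * a k by apply: mulr_gt0 => //; lra.
      have : 0 <= t0 * b k by apply: mulr_ge0 => //; lra.
      lra.
    exists (a k / (a k - b k)).
    have hab : 0 < a k - b k by lra.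
    split; first by apply: divr_gt0.
    split; first by rewrite ler_pdivrMr // mul1r; lra.
    have -> : (1 - t0 * (a k / (a k - b k))) * a k + t0 * (a k / (a k - b k)) * b k
              = (1 - t0) * a k.
      by field; rewrite gt_eqF.
    by apply: mulr_gt0 => //; lra.
  exists 1; split; first lra; split; first lra.
  by rewrite ha mulr0 add0r mulr1; apply: mulr_gt0.
exists (t0 * c); split; first by apply: mulr_gt0.
split.
  have : t0 * c <= t0 * 1 by rewrite ler_pM2l.
  lra.
move=> j; rewrite inE => /orP[/eqP ->|hj]; first by [].
apply: tail_ok => //.
  by case: (H j); [by rewrite inE hj orbT| move=> h; apply: ltW| case=> -> _].
exact: Ht.
Qed.

Lemma n0_mod N n r : (0 < N)%N -> (((n + N.-1) %% N).+1 + r = n + r %[mod N])%N.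
Proof.
move=> hN.
rewrite addSn -addnS modnDml.
have -> : (n + N.-1 + r.+1 = (n + r) + N)%N by lia.
by rewrite modnDr.
Qed.

Lemma orient (R : realType) N (kappa : nat -> R)
  (hinc : forall i j : nat, (1 <= i)%N -> (i < j)%N -> (j <= N)%N -> kappa i < kappa j)
  n r1 r2 : (0 < r1)%N -> (r1 < r2)%N -> (r2 < N)%N ->
  0 < (kap N kappa (n + r2) - kap N kappa (n + r1)) *
      ((kap N kappa n - kap N kappa (n + r2)) * (kap N kappa n - kap N kappa (n + r1))).
Proof.
move=> h1 h2 h3.
have hN : (0 < N)%N by lia.
set n0 := ((n + N.-1) %% N).+1.
have hn0 : (1 <= n0 <= N)%N by rewrite /n0 ltn_mod hN.
have e : forall r, kap N kappa (n + r) = kap N kappa (n0 + r).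
  by move=> r; apply: kap_mod; rewrite n0_mod.
have e0 : kap N kappa n = kap N kappa n0.
  by have := e 0%N; rewrite !addn0.
rewrite e0 !e.
have [c1|[c2|c3]] : (n0 + r2 <= N)%N \/ (n0 + r1 <= N < n0 + r2)%N \/ (N < n0 + r1)%N by lia.
- rewrite (@kapS _ N kappa n0 n0) ?(@kapS _ N kappa (n0 + r1) (n0 + r1))
          ?(@kapS _ N kappa (n0 + r2) (n0 + r2)) //; try lia.
  have a1 := hinc n0 (n0 + r1)%N ltac:(lia) ltac:(lia) ltac:(lia).
  have a2 := hinc (n0 + r1)%N (n0 + r2)%N ltac:(lia) ltac:(lia) ltac:(lia).
  apply: mulr_gt0; first lra.
  nra.
- rewrite (@kapS _ N kappa n0 n0) ?(@kapS _ N kappa (n0 + r1) (n0 + r1))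
          ?(@kapB _ N kappa (n0 + r2) (n0 + r2 - N)) //; try lia.
  have a1 := hinc n0 (n0 + r1)%N ltac:(lia) ltac:(lia) ltac:(lia).
  have a2 := hinc (n0 + r2 - N)%N n0 ltac:(lia) ltac:(lia) ltac:(lia).
  rewrite mulrCA; apply: mulr_gt0; first lra.
  nra.
- rewrite (@kapS _ N kappa n0 n0) ?(@kapB _ N kappa (n0 + r1) (n0 + r1 - N))
          ?(@kapB _ N kappa (n0 + r2) (n0 + r2 - N)) //; try lia.
  have a1 := hinc (n0 + r2 - N)%N n0 ltac:(lia) ltac:(lia) ltac:(lia).
  have a2 := hinc (n0 + r1 - N)%N (n0 + r2 - N)%N ltac:(lia) ltac:(lia) ltac:(lia).
  apply: mulr_gt0; first lra.
  apply: mulr_gt0; lra.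
Qed.

Lemma kap_eqN (R : realType) N (kappa : nat -> R) a b :
  (a = b \/ a = b + N \/ a + N = b)%N -> kap N kappa a = kap N kappa b.
Proof.
case=> [->|[->|<-]] //; apply: kap_mod; by rewrite modnDr.
Qed.

Lemma orientM (R : realType) N (kappa : nat -> R)
  (hinc : forall i j : nat, (1 <= i)%N -> (i < j)%N -> (j <= N)%N -> kappa i < kappa j)
  n v u r1 r2 : (0 < r1)%N -> (r1 < r2)%N -> (r2 < N)%N ->
  (v = n + r1 \/ v = n + r1 + N \/ v + N = n + r1)%N ->
  (u = n + r2 \/ u = n + r2 + N \/ u + N = n + r2)%N ->
  0 < (kap N kappa u - kap N kappa v) *
      ((kap N kappa n - kap N kappa u) * (kap N kappa n - kap N kappa v)).
Proof.
move=> h1 h2 h3 hv hu.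
rewrite (kap_eqN kappa hv) (kap_eqN kappa hu); exact: orient.
Qed.

Lemma part5 (R : realType) (Na Nb : nat) (kappa : nat -> R)
  (hNa : (1 <= Na)%N) (hNab : (Na < Nb)%N)
  (hinc : forall i j : nat, (1 <= i)%N -> (i < j)%N -> (j <= Na + Nb)%N ->
          kappa i < kappa j)
  (m : nat) :
  exists q : R * R, epsm Na Nb kappa m q = 1.
Proof.
set N := (Na + Nb)%N.
set K := kap N kappa.
pose qtP (y : R) k := (K (k + Na)%N - K k) * ((y - K (k + Na)%N) * (y - K k)).
set x0 := K m. set y1 := K (m + Nb)%N. set y2 := K (m + Na)%N.
pose a k := qtP x0 k.
pose b k := (qtP y1 k + qtP y2 k) / 2.
have Hab : forall k, k \in index_iota m (m + Nb).+1 -> 0 < a k \/ (a k = 0 /\ 0 < b k).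
  move=> k; rewrite mem_index_iota => hk.
  have [e|[e|e]] : (k = m \/ k = m + Nb \/ m < k < m + Nb)%N by lia.
  - right; rewrite e; split.
      by rewrite /a /qtP /x0 subrr !(mulr0, mul0r).
    rewrite /b /qtP /y2 subrr !(mulr0, mul0r) addr0.
    apply: divr_gt0; last lra.
    apply: (@orientM _ N kappa hinc (m + Nb)%N m (m + Na)%N Na (Na + Na)%N); lia.
  - right; rewrite e; split.
      rewrite /a /qtP /x0.
      have -> : K (m + Nb + Na)%N = K m by apply: kap_eqN; rewrite /N; lia.
      by rewrite subrr !(mulr0, mul0r).
    rewrite /b /qtP /y1 subrr !(mulr0, mul0r) add0r.
    apply: divr_gt0; last lra.
    apply: (@orientM _ N kappa hinc (m + Na)%N (m + Nb)%N (m + Nb + Na)%N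
           (Nb - Na)%N Nb); rewrite /N; lia.
  - left; rewrite /a /qtP /x0.
    apply: (@orientM _ N kappa hinc m k (k + Na)%N (k - m)%N (k - m + Na)%N);
      rewrite /N; lia.
have [t [ht0 [ht1 Ht]]] := find_t Hab.
exists ((1 - t) * x0 + t * ((y1 + y2) / 2),
        (1 - t) * x0 ^+ 2 + t * ((y1 ^+ 2 + y2 ^+ 2) / 2)).
apply: prod_theta_1 => k hk.
have := Ht k; rewrite mem_index_iota => /(_ hk).
congr (0 < _).
rewrite /a /b /qtP /qt /qmn /=. rewrite -/N -/K.
by field.
Qed.

Lemma part3 (R : realType) (Na Nb : nat) (kappa : nat -> R) m q :
  epsm Na Nb kappa m q = 1 -> Pm Na Nb kappa m q = 1.
Proof.
move=> /prod_theta_inv H.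
rewrite Pm_split !prod_theta_1 ?mulr1 // => k hk.
  apply: H; lia.
have -> : qt (Na + Nb) kappa k (k - Na) q = qt (Na + Nb) kappa (k - Na + Na) (k - Na) q.
  by rewrite subnK //; lia.
apply: H; lia.
Qed.

Theorem lemma5p2 (R : realType) (Na Nb : nat) (kappa : nat -> R)
  (hNa : (1 <= Na)%N) (hNab : (Na < Nb)%N)
  (hinc : forall i j : nat, (1 <= i)%N -> (i < j)%N -> (j <= Na + Nb)%N ->
          kappa i < kappa j)
  (m : nat) (hm1 : (1 <= m)%N) (hm2 : (m <= Na + Nb)%N) :
  ((2 * Na - 1 <= Nb)%N -> forall q : R * R, epsm Na Nb kappa m q = Pm Na Nb kappa m q)
  /\ ((Nb < 2 * Na - 1)%N -> forall q : R * R,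
        epsm Na Nb kappa m q =
        Pm Na Nb kappa m q *
        \prod_(m + Nb - Na + 1 <= k < m + Na)
           theta (qt (Na + Nb) kappa (k + Na)%N k q))
  /\ (forall q : R * R, epsm Na Nb kappa m q = 1 -> Pm Na Nb kappa m q = 1)
  /\ (forall q : R * R, epsm Na Nb kappa m q = 1 -> q.1 ^+ 2 <= q.2)
  /\ (exists q : R * R, epsm Na Nb kappa m q = 1).
Proof.
split; first by move=> h q; exact: ((part12 kappa m q hNa hNab).1 h).
split; first by move=> h q; exact: ((part12 kappa m q hNa hNab).2 h).
split; first by move=> q; exact: part3.
split; first by move=> q; exact: (part4 hNa hNab hinc hm1 hm2).
exact: part5.
Qed.
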